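(* Suppose the adversary places $b\ge 1$ bad objects into $s\ge 1$ targeted indices, each of which contains at least one of these bad objects. Then the adversary's total RB cost satisfies $\mathcal{B}\ge \dfrac{b^2}{8s}$.
   Context: Model. A hash table has $t$ indices with chaining. The objects at an index form a list, new objects are appended at the tail, and $L_i$ denotes the current number of objects in the list at index $i$. Under the algorithm \textsc{Depth Charge}, inserting an object at index $i$ costs the inserter an RB (resource-burning) cost of $L_i+1$. Objects inserted by the adversary are bad objects and are placed at indices of its choosing; objects inserted by clients are good objects. $\mathcal{B}$ denotes the total RB cost paid by the adversary. A targeted index is an index containing at least one bad object and at least one good object. *)

(* Defs.v *)
From mathcomp Require Import all_boot all_order all_algebra.
Set Implicit Arguments. Unset Strict Implicit. Unset Printing Implicit Defensive.

(* A hash table with t indices 'I_t and chaining.  An execution is the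
   sequence of insertions, in order; each insertion is a pair (i, bad)
   where i is the index and bad = true iff the object is a bad object
   (inserted by the adversary), bad = false for a good (client) object. *)
Definition event (t : nat) := ('I_t * bool)%type.

Definition list_len (t : nat) (hist : seq (event t)) (i : 'I_t) : nat :=
  count (fun x : event t => x.1 == i) hist.

(* Depth Charge: inserting at index i costs L_i + 1.  rb_cost_aux sums
   these costs over the bad insertions only. *)
Fixpoint rb_cost_aux (t : nat) (hist : seq (event t)) (e : seq (event t)) : nat :=
  match e with
  | [::] => 0
  | x :: e' =>
      (if x.2 then (list_len hist x.1).+1 else 0) + rb_cost_aux (rcons hist x) e'
  end.

Definition adv_cost (t : nat) (e : seq (event t)) : nat := rb_cost_aux [::] e.

Definition num_bad (t : nat) (e : seq (event t)) : nat :=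
  count (fun x : event t => x.2) e.

Definition has_bad (t : nat) (e : seq (event t)) (i : 'I_t) : bool :=
  has (fun x : event t => (x.1 == i) && x.2) e.
Definition has_good (t : nat) (e : seq (event t)) (i : 'I_t) : bool :=
  has (fun x : event t => (x.1 == i) && ~~ x.2) e.

Definition targeted (t : nat) (e : seq (event t)) (i : 'I_t) : bool :=
  has_bad e i && has_good e i.

(* Main.v *)
Require Import Defs.
From mathcomp Require Import zify.
From mathcomp Require Import all_boot all_order all_algebra.
Import GRing.Theory Num.Theory.
Set Implicit Arguments. Unset Strict Implicit.

Definition bc (t : nat) (h : seq (event t)) (i : 'I_t) : nat :=
  seq.count (fun x : event t => (x.1 == i) && x.2) h.

Lemma bc_le_len t (h : seq (event t)) i : bc h i <= list_len h i.
Proof. apply: sub_count => x /andP[]. by []. Qed.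

Lemma sum_ind t (j : 'I_t) : \sum_(i < t) ((j == i) : nat) = 1.
Proof.
rewrite (bigD1 j) //= eqxx big1 // => i /negbTE; by rewrite eq_sym => ->.
Qed.

Lemma sq_step t (h : seq (event t)) :
  forall e, \sum_(i < t) bc (h ++ e) i ^ 2 <= \sum_(i < t) bc h i ^ 2 + 2 * rb_cost_aux h e.
Proof.
move=> e; elim: e h => [|[j bd] e IH] h /=; first by rewrite cats0 addn0.
have := IH (rcons h (j, bd)); rewrite cat_rcons => H.
apply: (leq_trans H).
move: H => _; case: bd => /=; last first.
  have -> : \sum_(i < t) bc (rcons h (j, false)) i ^ 2 = \sum_(i < t) bc h i ^ 2.
    by apply: eq_bigr => i _; rewrite /bc -cats1 count_cat /= andbF /= !addn0.
  by rewrite add0n.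
have E : forall i, bc (rcons h (j, true)) i = bc h i + (j == i).
  by move=> i; rewrite /bc -cats1 count_cat /= andbT addn0.
have -> : \sum_(i < t) bc (rcons h (j, true)) i ^ 2 =
   \sum_(i < t) bc h i ^ 2 + \sum_(i < t) ((j == i) * (2 * bc h i + 1)).
  rewrite -big_split /=; apply: eq_bigr => i _; rewrite E.
  by case: (j == i) => /=; lia.
have -> : \sum_(i < t) ((j == i) * (2 * bc h i + 1)) = 2 * bc h j + 1.
  rewrite (bigD1 j) //= eqxx big1 ?addn0 ?mul1n //.
  by move=> i hi; rewrite eq_sym (negbTE hi).
set S0 := \sum_(i < t) bc h i ^ 2. have := bc_le_len h j; lia.
Qed.

Lemma cs (I : Type) (r : seq I) (x : I -> nat) :
  (\sum_(i <- r) x i) ^ 2 <= size r * \sum_(i <- r) x i ^ 2.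
Proof.
have aux : forall r, forall a, 2 * a * (\sum_(i <- r) x i) <= size r * a ^ 2 + \sum_(i <- r) x i ^ 2.
  move=> {}r a; elim: r => [|y r IH]; first by rewrite !big_nil; lia.
  rewrite !big_cons /=.
  have : 2 * a * x y <= a ^ 2 + x y ^ 2.
    have [le|le] := leqP a (x y).
      have -> : x y = a + (x y - a) by lia.
      set d := x y - a. nia.
    have -> : a = x y + (a - x y) by lia.
    set d := a - x y. nia.
  nia.
elim: r => [|y r IH]; first by rewrite !big_nil.
rewrite !big_cons /=.
have := aux r (x y).
nia.
Qed.

Lemma num_bad_sum t (e : seq (event t)) : num_bad e = \sum_(i < t) bc e i.
Proof.
elim: e => [|[j bd] e IH]; first by rewrite /num_bad big1.
rewrite /num_bad /= -/(num_bad e) IH /bc /=.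
rewrite big_split /=; congr (_ + _).
case: bd => /=; last by rewrite big1 // => i; rewrite andbF.
by under eq_bigr => i _ do rewrite andbT; rewrite sum_ind.
Qed.

Theorem lemma2 (t : nat) (e : seq (event t)) (b s : nat) :
  (1 <= b)%N -> (1 <= s)%N ->
  num_bad e = b ->
  #|[set i : 'I_t | has_bad e i]| = s ->
  (forall i : 'I_t, has_bad e i -> targeted e i) ->
  ((b ^ 2)%:R / (8 * s)%:R <= (adv_cost e)%:R :> rat)%R.
Proof.
move=> hb hs nb cS _.
set S := [set i : 'I_t | has_bad e i].
have bS : b = \sum_(i in S) bc e i.
  rewrite -nb num_bad_sum (bigID (fun i => i \in S)) /= [X in _ + X]big1 ?addn0 //.
  move=> i; rewrite inE /has_bad /bc => /negP nh.
  apply/eqP; rewrite -leqn0 leqNgt -has_count; exact/negP.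
have H1 : b ^ 2 <= s * \sum_(i in S) bc e i ^ 2.
  by rewrite bS -cS -!big_enum /= cardE; apply: cs.
have H2 : \sum_(i in S) bc e i ^ 2 <= \sum_(i < t) bc e i ^ 2.
  by rewrite [X in _ <= X](bigID (fun i => i \in S)) /= leq_addr.
have H3 := sq_step [::] e.
have Z : \sum_(i < t) bc [::] i ^ 2 = 0 by rewrite big1.
rewrite cat0s Z add0n in H3.
have Hn : b ^ 2 <= 8 * s * adv_cost e.
  rewrite /adv_cost. have := leq_trans H2 H3. nia.
rewrite ler_pdivrMr ?ltr0n ?muln_gt0 //.
rewrite -natrM ler_nat; lia.
Qed.
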